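(* Given any finite collection of Jordan blocks $J_1,\dots,J_k$, where $J_i$ has eigenvalue $\lambda_i\in\mathbb C$ and size $d_i\ge1$, there exists a purely competitive real matrix $B$ whose Jordan decomposition contains this multiset of Jordan blocks.
   Context: A square real matrix $B$ is purely competitive if $B_{ij}\le0$ for all $i\ne j$ and $B_{ii}=0$ for all $i$. *)

(* Defs.v *)
From HB Require Import structures.
From mathcomp Require Import all_boot all_order all_algebra.
From mathcomp Require Import complex.
Set Implicit Arguments. Unset Strict Implicit. Unset Printing Implicit Defensive.
Import Order.TTheory GRing.Theory Num.Theory.
Local Open Scope ring_scope.

Definition purely_competitive (R : realDomainType) (n : nat) (B : 'M[R]_n) : Prop :=
  (forall i j : 'I_n, i != j -> B i j <= 0) /\ (forall i : 'I_n, B i i = 0).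

Definition jordan_block (C : nzRingType) (lam : C) (d : nat) : 'M[C]_d :=
  \matrix_(i < d, j < d)
    (if i == j then lam else if (j : nat) == i.+1 then 1 else 0).

(* Main.v *)
Require Import Defs.
From HB Require Import structures.
From mathcomp Require Import all_boot all_order all_algebra.
From mathcomp Require Import complex.
From mathcomp Require Import lra.
Import Order.TTheory GRing.Theory Num.Theory.
Set Implicit Arguments. Unset Strict Implicit. Unset Printing Implicit Defensive.
Local Open Scope ring_scope.

Lemma castmx_mulE (K : comNzRingType) n n' (e : n = n') (A B : 'M[K]_n) :
  castmx (e, e) (A *m B) = castmx (e, e) A *m castmx (e, e) B.
Proof. by case: n' / e; rewrite !castmx_id. Qed.

Lemma castmx_unit (K : comUnitRingType) n n' (e : n = n') (A : 'M[K]_n) :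
  (castmx (e, e) A \in unitmx) = (A \in unitmx).
Proof. by case: n' / e; rewrite castmx_id. Qed.

Lemma unit_of_mul (K : comUnitRingType) n (A B : 'M[K]_n) c :
  A *m B = c%:M -> c \is a GRing.unit -> A \in unitmx.
Proof.
move=> h hc; have := congr1 determinant h; rewrite det_mulmx det_scalar => h'.
rewrite unitmxE; have : (\det A * \det B) \is a GRing.unit by rewrite h' unitrX.
by rewrite unitrM => /andP[].
Qed.

Lemma block_all (T : Type) (P : T -> Prop) m1 m2 n1 n2 (A : 'M[T]_(m1,n1))
  (B : 'M[T]_(m1,n2)) (C : 'M[T]_(m2,n1)) (D : 'M[T]_(m2,n2)) :
  (forall i j, P (A i j)) -> (forall i j, P (B i j)) ->
  (forall i j, P (C i j)) -> (forall i j, P (D i j)) ->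
  forall i j, P (block_mx A B C D i j).
Proof.
move=> hA hB hC hD i j; rewrite -(splitK i) -(splitK j).
case: (split i) => i'; case: (split j) => j' /=.
- by rewrite block_mxEul.
- by rewrite block_mxEur.
- by rewrite block_mxEdl.
- by rewrite block_mxEdr.
Qed.

Lemma block_diag (T : Type) (P : T -> Prop) m n (A : 'M[T]_m)
  (B : 'M[T]_(m,n)) (C : 'M[T]_(n,m)) (D : 'M[T]_n) :
  (forall i, P (A i i)) -> (forall i, P (D i i)) ->
  forall i, P (block_mx A B C D i i).
Proof.
move=> hA hD i; rewrite -(splitK i).
case: (split i) => i' /=.
- by rewrite block_mxEul.
- by rewrite block_mxEdr.
Qed.

Definition hb (K : fieldType) s N (D : 'M[K]_s) (X : 'M[K]_N) :=
  exists m (e : N = (s + m)%N) (M : 'M[K]_m) (P : 'M[K]_(s + m)),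
    P \in unitmx /\ castmx (e, e) X *m P = P *m block_mx D 0 0 M.

Lemma hb_trans (K : fieldType) s a b (D : 'M[K]_s) (Y : 'M[K]_a)
  (X H : 'M[K]_(a + b)) (Mb : 'M[K]_b) :
  hb D Y -> H \in unitmx -> X *m H = H *m block_mx Y 0 0 Mb -> hb D X.
Proof.
case=> m [e [M [P [uP hP]]]] uH hX; subst a; rewrite castmx_id in hP.
pose e' := esym (addnA s m b).
exists (m + b)%N, e', (block_mx M 0 0 Mb),
  (castmx (e', e') (H *m block_mx P 0 0 1%:M)); split.
  rewrite castmx_unit unitmx_mul uH /= unitmxE det_ublock det1 mulr1.
  by rewrite -unitmxE.
have := @block_mxA _ s m b s m b D 0 0 0 M 0 0 0 Mb.
rewrite /= !row_mx0 !col_mx0 => ->.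
rewrite -!castmx_mulE; congr castmx.
rewrite mulmxA hX -!mulmxA; congr (H *m _).
by rewrite !mulmx_block !mulmx0 !mul0mx !addr0 !add0r mulmx1 mul1mx hP.
Qed.


Section Gen.
Variable K : comNzRingType.
Variable n : nat.
Implicit Types X Y A N P : 'M[K]_n.

Lemma two_M m : (2%:R : K)%:M = 1%:M + 1%:M :> 'M[K]_m.
Proof. by apply/matrixP => i j; rewrite !mxE -mulrnDl. Qed.

Lemma N1_M m : (-1 : K)%:M = - 1%:M :> 'M[K]_m.
Proof. by apply/matrixP => a b; rewrite !mxE mulNrn. Qed.

Lemma stepC N P :
  (- block_mx N P P N) *m block_mx 1%:M 1%:M (- 1%:M) 1%:M =
  block_mx 1%:M 1%:M (- 1%:M) 1%:M *m block_mx (P - N) 0 0 (- (N + P)).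
Proof.
rewrite mulNmx !mulmx_block ?mulmxN ?mulNmx ?mulmx1 ?mul1mx ?mulmx0 ?mul0mx.
rewrite opp_block_mx ?addr0 ?add0r ?oppr0 ?sub0r; congr block_mx; [exact: opprB | by rewrite addrC].
Qed.

Lemma stepC_inv :
  block_mx 1%:M 1%:M (- 1%:M) 1%:M *m block_mx 1%:M (-1%:M) 1%:M 1%:M =
  (2%:R : K)%:M :> 'M[K]_(n + n).
Proof.
rewrite !mulmx_block ?mulmxN ?mulNmx ?mulmx1 (scalar_mx_block n n).
by rewrite !addNr opprK two_M.
Qed.

Lemma stepZ A :
  block_mx 0 A A 0 *m block_mx 1%:M 1%:M 1%:M (- 1%:M) =
  block_mx 1%:M 1%:M 1%:M (- 1%:M) *m block_mx A 0 0 (- A).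
Proof.
rewrite !mulmx_block ?mulmxN ?mulNmx ?mulmx1 ?mul1mx ?mulmx0 ?mul0mx.
rewrite ?addr0 ?add0r ?opprK.
by rewrite subr0.
Qed.

Lemma stepZ_inv :
  block_mx 1%:M 1%:M 1%:M (- 1%:M) *m block_mx 1%:M 1%:M 1%:M (- 1%:M) =
  (2%:R : K)%:M :> 'M[K]_(n + n).
Proof.
rewrite !mulmx_block ?mulmxN ?mulNmx ?mulmx1 (scalar_mx_block n n) ?opprK.
by rewrite subrr two_M.
Qed.

Lemma step1 (i : K) (hi : i * i = -1) X Y :
  block_mx X (- Y) Y X *m block_mx 1%:M 1%:M (- i%:M) i%:M =
  block_mx 1%:M 1%:M (- i%:M) i%:M *m block_mx (X + i *: Y) 0 0 (X - i *: Y).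
Proof.
rewrite !mulmx_block ?mulmxN ?mulNmx ?mulmx1 ?mul1mx ?mulmx0 ?mul0mx.
rewrite ?mul_mx_scalar ?mul_scalar_mx ?addr0 ?add0r ?opprK.
rewrite oppr0 add0r; congr block_mx.
  by rewrite scalerDr scalerA hi scaleN1r opprD opprK addrC.
by rewrite scalerBr scalerA hi scaleN1r opprK addrC.
Qed.

Lemma step1_inv (i : K) (hi : i * i = -1) :
  block_mx 1%:M 1%:M (- i%:M) i%:M *m block_mx 1%:M i%:M 1%:M (- i%:M) =
  (2%:R : K)%:M :> 'M[K]_(n + n).
Proof.
rewrite !mulmx_block ?mulmxN ?mulNmx ?mulmx1 ?mul1mx (scalar_mx_block n n).
rewrite -?scalar_mxM ?hi.
by rewrite subrr addNr N1_M opprK two_M.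
Qed.
End Gen.

Section Main.
Variable R : rcfType.
Local Notation rc := (real_complex R).

Lemma maxsub (x : R) : Num.max x 0 - Num.max (- x) 0 = x.
Proof.
rewrite /Num.max; case: ifP => h1; case: ifP => h2; lra.
Qed.

Lemma main_hb s (D : 'M[R[i]]_s) :
  exists N (Cr : 'M[R]_N), purely_competitive Cr /\ hb D (map_mx rc Cr).
Proof.
pose Ar : 'M[R]_(s + s) :=
  block_mx (map_mx (@complex.Re R) D) (- map_mx (@complex.Im R) D) (map_mx (@complex.Im R) D) (map_mx (@complex.Re R) D).
pose Zr := block_mx 0 Ar Ar 0.
pose Pp := map_mx (fun x => Num.max x 0) Zr.
pose Nn := map_mx (fun x => Num.max (- x) 0) Zr.
pose Cr := - block_mx Nn Pp Pp Nn.
have hi : ('i%C : R[i]) * 'i%C = -1 by rewrite -expr2 sqr_i.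
have u2 : (2%:R : R[i]) \is a GRing.unit by rewrite unitfE pnatr_eq0.
pose X := map_mx (fun z => rc (complex.Re z)) D.
pose Y := map_mx (fun z => rc (complex.Im z)) D.
have hA : hb D (map_mx rc Ar).
  exists s, erefl, (X - 'i%C *: Y), (block_mx 1%:M 1%:M (- ('i%C)%:M) ('i%C)%:M).
  split; first exact: (unit_of_mul (step1_inv s hi) u2).
  rewrite castmx_id.
  have -> : map_mx rc Ar = block_mx X (- Y) Y X.
    by rewrite /Ar map_block_mx map_mxN -!map_mx_comp.
  have {1}-> : D = X + 'i%C *: Y.
    by apply/matrixP => a b; rewrite !mxE; exact: complexE.
  exact: step1.
have hZ : hb D (map_mx rc Zr).
  apply: (hb_trans hA (H := block_mx 1%:M 1%:M 1%:M (- 1%:M)) (Mb := - map_mx rc Ar)).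
    exact: (unit_of_mul (stepZ_inv _ _) u2).
  by rewrite /Zr map_block_mx map_mx0 stepZ.
have hC : hb D (map_mx rc Cr).
  apply: (hb_trans hZ (H := block_mx 1%:M 1%:M (- 1%:M) 1%:M)
     (Mb := - (map_mx rc Nn + map_mx rc Pp))).
    exact: (unit_of_mul (stepC_inv _ _) u2).
  have -> : Zr = Pp - Nn by apply/matrixP => a b; rewrite !mxE maxsub.
  by rewrite /Cr map_mxN map_block_mx map_mxB stepC.
exists _, Cr; split => //.
have Zd : forall a, Zr a a = 0.
  by apply: (block_diag (P := fun x => x = 0)) => a; rewrite mxE.
split.
  move=> a b _; rewrite /Cr mxE oppr_le0.
  apply: (block_all (P := fun x => 0 <= x)) => a' b'; rewrite mxE le_max lexx orbT //.
move=> a; rewrite /Cr mxE.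
rewrite (block_diag (P := fun x => x = 0)) ?oppr0 // => a'; rewrite mxE Zd oppr0.
all: by rewrite ?/Num.max ?ltxx.
Qed.
End Main.

Theorem lemma9 (R : rcfType) (k : nat) (lam : 'I_k -> R[i]) (d : 'I_k -> nat)
    (hd : forall i, (0 < d i)%N) :
  exists (m : nat) (B : 'M[R]_(\sum_(i < k) d i + m)),
    purely_competitive B /\
    exists (M : 'M[R[i]]_m) (P : 'M[R[i]]_(\sum_(i < k) d i + m)),
      P \in unitmx /\
      map_mx (real_complex R) B *m P =
      P *m block_mx (\mxdiag_(i < k) jordan_block (lam i) (d i)) 0 0 M.
Proof.
have [N [Cr [[hoff hdiag] [m [e [M [P [uP hP]]]]]]]] :=
  main_hb (\mxdiag_(i < k) jordan_block (lam i) (d i)).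
exists m, (castmx (e, e) Cr); split.
  split.
    move=> a b hab; rewrite castmxE; apply: hoff.
    by apply: contra hab => /eqP /cast_ord_inj ->.
  by move=> a; rewrite castmxE hdiag.
exists M, P; split => //.
by rewrite map_castmx.
Qed.
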